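(* Let $\gamma\in\{\tfrac12,1,\dots\}$, $\varepsilon\in\{0,\tfrac12\}$ and $j\in\tfrac12\mathbb Z$ with $j-\varepsilon\notin\mathbb Z$. Then on each $J_0$-eigenspace $V_M$ ($M\in\varepsilon+\gamma+\mathbb Z$, spanned by $|\gamma,\mu\rangle\otimes|j,M-\mu\rangle$, $\mu\in\{-\gamma,\dots,\gamma\}$) the Casimir $Q$ has eigenvalues $-(j+\mu)(j+\mu+1)$, $\mu\in\{-\gamma,\dots,\gamma\}$ (counted with algebraic multiplicity), and $Q$ is diagonalisable on $F_\gamma\otimes C^\varepsilon_j$ if and only if $j>\gamma-1$ or $j<-\gamma$.
   Context: Let $\mathfrak{spin}(2,1)_{\mathbb C}$ have basis $J_0,J_+,J_-$ with $[J_0,J_\pm]=\pm J_\pm$, $[J_+,J_-]=-2J_0$, and Casimir $Q=-J_0(J_0-1)+J_+J_-$. Set $\Gamma_\pm(j,m)=\mathrm i\sqrt{j\mp m}\,\sqrt{j\pm m+1}$. A module with basis $\{|j,m\rangle\}$ has action $J_0|j,m\rangle=m|j,m\rangle$, $J_\pm|j,m\rangle=\Gamma_\pm(j,m)|j,m\pm1\rangle$. The continuous series module $C^\varepsilon_j$ has basis $|j,m\rangle$, $m\in\varepsilon+\mathbb Z$. The finite-dimensional module $F_\gamma$ has basis $|\gamma,\mu\rangle$, $\mu\in\{-\gamma,\dots,\gamma\}$. On a tensor product the generators act as $J_0\otimes1+1\otimes J_0$, $J_\pm\otimes1+1\otimes J_\pm$. *)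

(* Defs.v *)
From HB Require Import structures.
From mathcomp Require Import all_boot all_order all_algebra all_field.
Set Implicit Arguments. Unset Strict Implicit. Unset Printing Implicit Defensive.
Import Order.TTheory GRing.Theory Num.Theory.
Local Open Scope ring_scope.

Definition Gp (j m : algC) : algC := 'i * sqrtC (j - m) * sqrtC (j + m + 1).
Definition Gm (j m : algC) : algC := 'i * sqrtC (j + m) * sqrtC (j - m + 1).

(* gamma = g/2 ; the k-th weight of F_gamma is mu_k = -gamma + k, k = 0..g *)
Definition gam (g : nat) : algC := g%:R / 2.
Definition mu (g k : nat) : algC := k%:R - gam g.

(* Basis of V_M (J0-eigenspace of F_gamma (x) C_j^eps with eigenvalue M):
     e_k = |gamma, mu_k> (x) |j, M - mu_k>,  k : 'I_(g+1).
   Matrices act on column coordinate vectors: A i k = coefficient of e_i in A e_k.  J_+ maps V_M to V_(M+1):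
     J_+ e_k = Gamma_+(gamma,mu_k) e'_(k+1) + Gamma_+(j,M-mu_k) e'_k
   (the first term vanishes when k = g since Gamma_+(gamma,gamma)=0).
   J_- maps V_M to V_(M-1):
     J_- e_k = Gamma_-(gamma,mu_k) e'_(k-1) + Gamma_-(j,M-mu_k) e'_k
   (the first term vanishes when k = 0 since Gamma_-(gamma,-gamma)=0). *)
Definition Jp_blk (g : nat) (j M : algC) : 'M[algC]_(g.+1) :=
  \matrix_(i, k) ((i == k.+1 :> nat)%:R * Gp (gam g) (mu g k)
                  + (i == k :> nat)%:R * Gp j (M - mu g k)).
Definition Jm_blk (g : nat) (j M : algC) : 'M[algC]_(g.+1) :=
  \matrix_(i, k) ((i.+1 == k :> nat)%:R * Gm (gam g) (mu g k)
                  + (i == k :> nat)%:R * Gm j (M - mu g k)).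
Definition J0_blk (g : nat) (M : algC) : 'M[algC]_(g.+1) := M%:M.

Definition Q_blk (g : nat) (j M : algC) : 'M[algC]_(g.+1) :=
  - (J0_blk g M *m (J0_blk g M - 1%:M)) + Jp_blk g j (M - 1) *m Jm_blk g j M.

(* Q is diagonalisable on F_gamma (x) C_j^eps = (+)_M V_M  iff it is on every
   (Q-invariant, finite-dimensional) V_M, M in eps + gamma + Z. *)
Definition Q_diagonalisable (g : nat) (eps j : algC) : Prop :=
  forall M : algC, (M - eps - gam g) \is a Num.int ->
    diagonalizable (Q_blk g j M).

(* Main.v *)
Require Import Defs.
From HB Require Import structures.
From mathcomp Require Import all_boot all_order all_algebra all_field.
From mathcomp Require Import ring lra zify.
Import Order.TTheory GRing.Theory Num.Theory.
Local Open Scope ring_scope.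

Lemma gam_mu g k : gam g + mu g k = k%:R.
Proof. rewrite /mu /gam; ring. Qed.
Lemma gam_mu' g k : gam g - mu g k = g%:R - k%:R.
Proof. rewrite /mu /gam. have h2 : (2 : algC) != 0 by rewrite pnatr_eq0. field. done. Qed.

Lemma sq2 (x : algC) : sqrtC x * sqrtC x = x.
Proof. by rewrite -expr2 sqrtCK. Qed.

Lemma GmGp (j m : algC) : Gm j m * Gp j (m - 1) = - ((j + m) * (j - m + 1)).
Proof.
rewrite /Gm /Gp.
have -> : j - (m - 1) = j - m + 1 by ring.
have -> : j + (m - 1) + 1 = j + m by ring.
have hi : 'i * 'i = -1 :> algC by rewrite -expr2 sqrCi.
transitivity ('i * 'i * (sqrtC (j + m) * sqrtC (j + m)) * (sqrtC (j - m + 1) * sqrtC (j - m + 1))).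
  ring.
by rewrite hi !sq2; ring.
Qed.

Lemma GmGp_gam g k : Gm (gam g) (mu g k.+1) * Gp (gam g) (mu g k) = - (k.+1%:R * (g%:R - k%:R)).
Proof.
rewrite /Gm /Gp gam_mu.
have -> : gam g - mu g k.+1 + 1 = g%:R - k%:R.
  rewrite /mu /gam -addn1 natrD. have h2 : (2 : algC) != 0 by rewrite pnatr_eq0. field. done.
have -> : gam g + mu g k + 1 = k.+1%:R by rewrite gam_mu -addn1 natrD.
rewrite gam_mu'.
have hi : 'i * 'i = -1 :> algC by rewrite -expr2 sqrCi.
transitivity ('i * 'i * (sqrtC k.+1%:R * sqrtC k.+1%:R) * (sqrtC (g%:R - k%:R) * sqrtC (g%:R - k%:R)) :> algC).
  ring.
by rewrite hi !sq2; ring.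
Qed.

Lemma nz1 (n : nat) : (1 + n%:R : algC) != 0.
Proof. by rewrite addrC natr1 pnatr_eq0. Qed.

Lemma sum_ind (R : pzSemiRingType) (n c : nat) (F : nat -> R) :
  \sum_(l < n) ((l : nat) == c)%:R * F l = (c < n)%:R * F c.
Proof.
elim: n => [|n IH]; first by rewrite big_ord0 mul0r.
rewrite big_ord_recr /= IH.
case: (ltngtP c n) => [h|h|->].
- by rewrite (ltn_trans h (ltnSn _)) mul0r addr0.
- by rewrite ltnNge h !mul0r addr0.
- by rewrite ltnSn mul0r add0r.
Qed.

Lemma sum_indS (R : pzSemiRingType) (n c : nat) (F : nat -> R) :
  \sum_(l < n) (c == (l : nat).+1)%:R * F l = if c is c'.+1 then (c' < n)%:R * F c' else 0.
Proof.
case: c => [|c]; first by rewrite big1 // => l _; rewrite /= mul0r.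
under eq_bigr => l _ do rewrite eqSS eq_sym.
exact: sum_ind.
Qed.

Lemma binrel (i k : nat) : i.+1%:R * ('C(k, i.+1))%:R = (k%:R - i%:R) * ('C(k, i))%:R :> algC.
Proof.
case: (leqP i k) => h.
  by rewrite -natrB // -!natrM mul_bin_left.
by rewrite !bin_small ?mulr0 // ltnS ltnW.
Qed.

Lemma char_poly_sim {F : fieldType} {n} {A B P : 'M[F]_n} :
  P \in unitmx -> P *m A = B *m P -> char_poly A = char_poly B.
Proof.
move=> Pu eqP.
pose Pp := map_mx polyC P.
have e : Pp *m char_poly_mx A = char_poly_mx B *m Pp.
  rewrite /char_poly_mx mulmxBr mulmxBl -scalar_mxC -map_mxM eqP map_mxM.
  by [].
have : \det Pp * char_poly A = char_poly B * \det Pp.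
  by rewrite /char_poly -!det_mulmx e.
rewrite det_map_mx [_ * char_poly A]mulrC => /mulIf; apply.
by rewrite polyC_eq0 -unitfE -unitmxE.
Qed.

Section Blk.
Variables (g : nat) (j M : algC).

Definition wk k := Gm j (M - mu g k).
Definition ck k := - (j + (M - mu g k)) * Gm (gam g) (mu g k.+1) / (wk k * k.+1%:R).
Fixpoint dd k := if k is k'.+1 then ck k' * dd k' else 1.
Definition ee k := (j + (M - mu g k)) * dd k / wk k.
Definition Dm : 'M[algC]_(g.+1) := diag_mx (\row_(k < g.+1) dd k).
Definition Em : 'M[algC]_(g.+1) := diag_mx (\row_(k < g.+1) ee k).
Definition Jm2 : 'M[algC]_(g.+1) :=
  \matrix_(i, k) ((i == k :> nat)%:R * (j + (M - mu g k)) + (i.+1 == k :> nat)%:R * (- k%:R)).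
Definition Jp2 : 'M[algC]_(g.+1) :=
  \matrix_(i, k) ((i == k :> nat)%:R * ((M - 1 - mu g k) - j) + (i == k.+1 :> nat)%:R * (g%:R - k%:R)).

Hypothesis Hw : forall k, (k <= g)%N -> wk k != 0.

Lemma EJm : Em *m Jm_blk g j M = Jm2 *m Dm.
Proof.
apply/matrixP => i k; rewrite mul_diag_mx mul_mx_diag !mxE.
case: (eqVneq (i : nat) k) => [eik|nik].
  have wn := Hw _ (ltn_ord k).
  rewrite /ee -eik (gtn_eqF (ltnSn i)) in wn *.
  rewrite !mul0r !add0r !mul1r -/(wk i). field. done.
case: (eqVneq (i.+1 : nat) k) => [eik|nik2]; last by rewrite /= !(mul0r, mulr0, addr0).
have wn := Hw _ (ltn_ord i).
have hi : (i.+1%:R : algC) != 0 by rewrite pnatr_eq0.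
rewrite /= !(mulr1, mul1r, mul0r, addr0, add0r) -eik /= /ck /ee.
field. by rewrite nz1 wn.
Qed.

Lemma DJp : Dm *m Jp_blk g j (M - 1) = Jp2 *m Em.
Proof.
apply/matrixP => i k; rewrite mul_diag_mx mul_mx_diag !mxE.
case: (eqVneq (i : nat) k) => [eik|nik].
  have wn := Hw _ (ltn_ord k).
  rewrite /ee -eik (ltn_eqF (ltnSn i)) in wn *.
  rewrite !mul0r !add0r !mul1r.
  have := GmGp j (M - mu g i). rewrite -/(wk i) (_ : M - mu g i - 1 = M - 1 - mu g i); last by ring.
  move=> e. transitivity (dd i * (wk i * Gp j (M - 1 - mu g i)) / wk i).
    field. done.
  rewrite e. field. done.
case: (eqVneq (i : nat) k.+1) => [eik|nik2]; last by rewrite /= !(mul0r, mulr0, addr0).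
have wn := Hw _ (ltn_ord i).
have wk' : wk k != 0 by apply: Hw; have := ltn_ord i; rewrite eik ltnS => /ltnW.
have hi : (k.+1%:R : algC) != 0 by rewrite pnatr_eq0.
rewrite /= !(mulr1, mul1r, mul0r, addr0, add0r) eik /= /ck /ee.
have := GmGp_gam g k => e.
transitivity (- (j + (M - mu g k)) * (Gm (gam g) (mu g k.+1) * Gp (gam g) (mu g k)) / (wk k * k.+1%:R) * dd k).
  field. by rewrite nz1 wk'.
rewrite e. field. by rewrite nz1 wk'.
Qed.

Definition Pb : 'M[algC]_(g.+1) := \matrix_(i, k) ('C(k, i))%:R.
Definition Delta : 'M[algC]_(g.+1) := diag_mx (\row_(k < g.+1) (j + (M - mu g k))).
Definition Lp : 'M[algC]_(g.+1) :=
  \matrix_(i, k) ((i == k :> nat)%:R * (M - 1 - j - gam g + k%:R) + (i == k.+1 :> nat)%:R * (g%:R - k%:R)).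

Lemma JmP : Jm2 *m Pb = Pb *m Delta.
Proof.
apply/matrixP => i k; rewrite mul_mx_diag !mxE.
under eq_bigr => l _ do rewrite !mxE mulrDl [(i == l :> nat)]eq_sym [(i.+1 == l :> nat)]eq_sym -!mulrA.
rewrite big_split /= (sum_ind _ _ _ (fun l => (j + (M - mu g l)) * 'C(k, l)%:R)) (sum_ind _ _ _ (fun l => (1 *- l) * 'C(k, l)%:R)).
have e1 : (i.+1 < g.+1)%:R * ('C(k, i.+1)%:R : algC) = 'C(k,i.+1)%:R.
  case: ltnP => h; rewrite ?mul1r // bin_small ?mulr0 //; apply: leq_trans (ltn_ord k) h.
rewrite ltn_ord mul1r mulrCA e1 mulNr binrel /mu; ring.
Qed.

Lemma binrel' (i k : nat) : ('C(k, i.+1))%:R = (k%:R - i%:R) * ('C(k, i))%:R / i.+1%:R :> algC.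
Proof. rewrite -binrel. field. by rewrite nz1. Qed.

Lemma JpP : Jp2 *m Pb = Pb *m Lp.
Proof.
apply/matrixP => i k; rewrite !mxE.
under eq_bigr => l _ do rewrite !mxE mulrDl [(i == l :> nat)]eq_sym -!mulrA.
under [in RHS]eq_bigr => l _ do rewrite !mxE mulrDr [_ * ((l == k.+1 :> nat)%:R * _)]mulrCA [_ * ((l == k :> nat)%:R * _)]mulrCA.
rewrite !big_split /= (sum_ind _ _ _ (fun l => (M - 1 - mu g l - j) * 'C(k, l)%:R))
  (sum_indS _ _ _ (fun l => (g%:R - l%:R) * 'C(k, l)%:R))
  (sum_ind _ _ _ (fun l => 'C(l, i)%:R * (M - 1 - j - gam g + k%:R)))
  (sum_ind _ _ _ (fun l => 'C(l, i)%:R * (g%:R - k%:R))).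
have e2 : (k.+1 < g.+1)%:R * ('C(k.+1, i)%:R * (g%:R - k%:R)) = 'C(k.+1, i)%:R * (g%:R - k%:R) :> algC.
  case: ltnP => h; rewrite ?mul1r // mul0r.
  have -> : (k : nat) = g by apply/eqP; rewrite eqn_leq -ltnS ltn_ord.
  by rewrite subrr mulr0.
rewrite e2 !ltn_ord !mul1r.
have h2 : (2 : algC) != 0 by rewrite pnatr_eq0.
move: (ltn_ord i); case: (nat_of_ord i) => [|i'] hi /=.
  rewrite !bin0 /mu /gam; field. done.
rewrite (ltn_trans (ltnSn i') hi) mul1r binS natrD !binrel' /mu /gam.
field. exact: nz1.
Qed.

Definition Cm := J0_blk g M *m (J0_blk g M - 1%:M).
Lemma Cm_scalar : Cm = (M * (M - 1))%:M.
Proof. by rewrite /Cm /J0_blk -(raddfB (@scalar_mx _ _)) -scalar_mxM. Qed.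
Definition Tm := - Cm + Jp2 *m Jm2.
Definition Um := - Cm + Lp *m Delta.

Lemma DQ : Dm *m Q_blk g j M = Tm *m Dm.
Proof.
rewrite /Q_blk -/Cm /Tm !mulmxDr !mulmxDl mulmxA DJp -mulmxA EJm mulmxA.
by rewrite Cm_scalar !mulmxN scalar_mxC !mulNmx.
Qed.

Lemma TP : Tm *m Pb = Pb *m Um.
Proof.
rewrite /Tm /Um mulmxDr mulmxDl -[Jp2 *m Jm2 *m Pb]mulmxA JmP mulmxA JpP -mulmxA.
by rewrite Cm_scalar !mulmxN !mulNmx scalar_mxC.
Qed.

Lemma Pb_unit : Pb \in unitmx.
Proof.
rewrite unitmxE -det_tr det_trig.
  by rewrite (eq_bigr (fun _ => 1)) ?big1_eq ?unitr1 // => i _; rewrite !mxE binn.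
apply/is_trig_mxP => i k lt; rewrite !mxE bin_small //.
Qed.

Hypothesis Hj : forall k, (k <= g)%N -> j + (M - mu g k) != 0.

Lemma Gm_gam_nz k : (k < g)%N -> Gm (gam g) (mu g k.+1) != 0.
Proof.
move=> lt; rewrite /Gm gam_mu.
have -> : gam g - mu g k.+1 + 1 = (g - k)%:R.
  rewrite natrB ?(ltnW lt) // /mu /gam -natr1. have h2 : (2 : algC) != 0 by rewrite pnatr_eq0. field. done.
rewrite !mulf_neq0 ?sqrtC_eq0 ?pnatr_eq0 ?subn_eq0 -?ltnNge //.
exact: neq0Ci.
Qed.

Lemma dd_nz k : (k <= g)%N -> dd k != 0.
Proof.
elim: k => [|k IH] lt /=; first exact: oner_neq0.
rewrite mulf_neq0 ?IH ?(ltnW lt) // /ck.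
apply: mulf_neq0; first apply: mulf_neq0.
- by rewrite oppr_eq0 Hj // ltnW.
- exact: Gm_gam_nz.
- by rewrite invr_eq0 mulf_neq0 ?Hw ?(ltnW lt) // pnatr_eq0.
Qed.

Lemma Dm_unit : Dm \in unitmx.
Proof.
rewrite unitmxE det_diag unitfE; apply/prodf_neq0 => i _; rewrite mxE.
exact: dd_nz (ltn_ord i).
Qed.

Lemma Um_trig : is_trig_mx Um.
Proof.
apply/is_trig_mxP => i k lt.
rewrite /Um Cm_scalar mul_mx_diag !mxE (ltn_eqF lt).
have -> : (i == k.+1 :> nat) = false by apply/negbTE; rewrite neq_ltn ltnS ltnW.
have /negbTE -> : i != k by rewrite -val_eqE /= neq_ltn lt.
by rewrite /= !(mul0r, mulr0, add0r, addr0, oppr0, mulr0n).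
Qed.

Lemma charQ : char_poly (Q_blk g j M) =
  \prod_(k < g.+1) ('X - (- ((j + mu g k) * (j + mu g k + 1)))%:P).
Proof.
rewrite (char_poly_sim Dm_unit DQ) -(char_poly_sim Pb_unit (esym TP)) char_poly_trig ?Um_trig //.
rewrite (reindex_inj rev_ord_inj) /=; apply: eq_bigr => k _; congr ('X - _%:P).
rewrite /Um Cm_scalar mul_mx_diag !mxE /= eqxx subSS.
have e : (g - k)%:R = g%:R - k%:R :> algC by rewrite natrB // -ltnS ltn_ord.
rewrite eqxx (ltn_eqF (ltnSn _)) mulr1n mul1r mul0r addr0 !e.
rewrite /mu /gam.
have h2 : (2 : algC) != 0 by rewrite pnatr_eq0.
rewrite !e. field. done.
Qed.

Lemma Um_entry i k : Um i k = - (M * (M - 1)) *+ (i == k) +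
   ((i == k :> nat)%:R * (M - 1 - j - gam g + k%:R) + (i == k.+1 :> nat)%:R * (g%:R - k%:R)) * (j + (M - mu g k)).
Proof. by rewrite /Um Cm_scalar mul_mx_diag !mxE mulNrn. Qed.

Lemma rankU r : (g <= \rank (Um - r%:M)%R)%N.
Proof.
pose f : 'I_g -> 'I_g.+1 := fun i => lift ord0 i.
pose h : 'I_g -> 'I_g.+1 := fun i => widen_ord (leqnSn g) i.
pose A : 'M[algC]_(g.+1) := Um - r%:M.
pose B := rowsub f (colsub h A).
have BA : (\rank B <= \rank (Um - r%:M)%R)%N.
  rewrite /B.
  have -> : colsub h A = A *m colsub h 1%:M by rewrite mulmx_colsub mulmx1.
  rewrite rowsubE.
  exact: leq_trans (mxrankM_maxr _ _) (mxrankM_maxl _ _).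
suff Bu : B \in unitmx by move: BA; rewrite (mxrank_unit Bu).
rewrite /B /A unitmxE -det_tr det_trig.
  rewrite unitfE; apply/prodf_neq0 => i _.
  rewrite [Um]lock !mxE -lock Um_entry /f /h /= /bump /= add1n.
  rewrite (gtn_eqF (ltnSn i)) eqxx.
  have -> : (lift ord0 i == widen_ord (leqnSn g) i) = false.
    by apply/negbTE; rewrite -val_eqE /= /bump /= add1n (gtn_eqF (ltnSn i)).
  rewrite !(mulr0n, mul0r, add0r, mul1r, mulr1, subr0, oppr0).
  apply: mulf_neq0.
    by rewrite subr_eq0 eqr_nat gtn_eqF.
  by apply: Hj; apply: ltnW.
apply/is_trig_mxP => i k lt; rewrite [Um]lock !mxE -lock Um_entry /f /h /= /bump /= add1n.
have -> : (k.+1 == i :> nat) = false by rewrite gtn_eqF // ltnW.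
have -> : (k.+1 == i.+1 :> nat) = false by rewrite eqSS gtn_eqF.
have -> : (lift ord0 k == widen_ord (leqnSn g) i) = false.
  by rewrite -val_eqE /= /bump /= add1n gtn_eqF // ltnW.
by rewrite !(mulr0n, mul0r, add0r, mulr0, subr0, oppr0, addr0).
Qed.

Lemma rankQ r : (g <= \rank (Q_blk g j M - r%:M)%R)%N.
Proof.
have e1 : Dm *m (Q_blk g j M - r%:M) *m invmx Dm = Tm - r%:M.
  by rewrite mulmxBr DQ scalar_mxC -mulmxBl mulmxK // Dm_unit.
have e2 : invmx Pb *m (Tm - r%:M) *m Pb = Um - r%:M.
  by rewrite -mulmxA mulmxBl TP -scalar_mxC -mulmxBr mulKmx // Pb_unit.
apply: leq_trans (rankU r) _; rewrite -e2 -e1.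
apply: leq_trans (mxrankM_maxl _ _) _.
apply: leq_trans (mxrankM_maxr _ _) _.
apply: leq_trans (mxrankM_maxl _ _) _.
exact: mxrankM_maxr.
Qed.
End Blk.



Lemma prod_seq n (lam : 'I_n -> algC) :
  \prod_(k < n) ('X - (lam k)%:P) = \prod_(x <- [seq lam k | k <- enum 'I_n]) ('X - x%:P).
Proof. by rewrite big_map big_enum. Qed.

Lemma diag_of_uniq n (A : 'M[algC]_n.+1) (lam : seq algC) :
  uniq lam -> char_poly A = \prod_(x <- lam) ('X - x%:P) -> diagonalizable A.
Proof.
move=> ul cp; apply/diagonalizableP; exists lam => //.
by rewrite -cp mxminpoly_dvd_char.
Qed.

Lemma rank_sum_le n (A : 'M[algC]_n) (lam rs : seq algC) :
  (forall r, \rank (eigenspace A r) <= (r \in lam))%N ->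
  (\rank (\sum_(r <- rs) eigenspace A r)%MS <= size (filter (mem lam) rs))%N.
Proof.
move=> H; elim: rs => [|r rs IH]; first by rewrite big_nil mxrank0.
rewrite big_cons /=.
apply: leq_trans (mxrank_adds_leqif _ _).1 _.
case: (boolP (r \in lam)) => h /=.
  by have := H r; rewrite h => Hr'; rewrite -add1n leq_add.
by have := H r; rewrite (negbTE h) => Hr'; rewrite -[X in (_ <= X)%N]add0n leq_add.
Qed.

Lemma nondiag n (A : 'M[algC]_n.+1) (lam : seq algC) :
  (forall r, (n <= \rank (A - r%:M)%R)%N) ->
  (forall r, @eigenvalue _ _ A r -> r \in lam) ->
  size lam = n.+1 -> ~~ uniq lam -> ~ diagonalizable A.
Proof.
move=> Hr Hev Hs Hu /diagonalizablePeigen [rs urs eqS].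
have r1 : \rank (\sum_(r <- rs) eigenspace A r)%MS = n.+1 by rewrite eqS.1 mxrank1.
have ub r : (\rank (eigenspace A r) <= (r \in lam))%N.
  case: (boolP (@eigenvalue _ _ A r)) => ev.
    rewrite (Hev _ ev) /eigenspace mxrank_ker; have := Hr r; move: (\rank _) => a; rewrite [nat_of_bool true]/=; lia.
  by move: ev; rewrite /eigenvalue negbK => /eqP ->; rewrite mxrank0.
have := @rank_sum_le _ A lam rs ub; rewrite r1 => h1.
have h2 : (size (filter (mem lam) rs) <= size (undup lam))%N.
  apply: uniq_leq_size; first exact: filter_uniq.
  by move=> x; rewrite mem_filter mem_undup => /andP[].
have h3 : size (undup lam) != size lam.
  by apply: contra Hu => /eqP e; rewrite (uniq_size_uniq (undup_uniq lam) (mem_undup lam)) e.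
have := size_undup lam; rewrite Hs in h3 *; lia.
Qed.



Lemma ztoR (n : nat) : (n%:Z)%:~R = n%:R :> algC.
Proof. by rewrite -pmulrn. Qed.

Lemma notint_add (x y : algC) : x \isn't a Num.int -> y \is a Num.int -> x + y != 0.
Proof.
move=> hx hy; apply: contra hx; rewrite addr_eq0 => /eqP ->.
by rewrite rpredN.
Qed.

Theorem mainTheorem8 (g : nat) (eps j : algC) :
  (1 <= g)%N ->
  (eps = 0 \/ eps = 1 / 2) ->
  (j *+ 2) \is a Num.int ->
  (j - eps) \isn't a Num.int ->
  (forall M : algC, (M - eps - gam g) \is a Num.int ->
     char_poly (Q_blk g j M) =
       \prod_(k < g.+1) ('X - (- ((j + mu g k) * (j + mu g k + 1)))%:P))
  /\
  (Q_diagonalisable g eps j <-> (gam g - 1 < j \/ j < - gam g)).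
Proof.
move=> g1 heps hj2 hjeps.
have h2 : (2 : algC) != 0 by rewrite pnatr_eq0.
have [J2 eJ2] : exists J2 : int, j *+ 2 = J2%:~R by apply/intrP.
have heps2 : eps *+ 2 \is a Num.int.
  case: heps => ->; first by rewrite mul0rn rpred0.
  have -> : (1 / 2 : algC) *+ 2 = 1 by rewrite -mulr_natr; field.
  exact: rpred1.
have HWJ : forall M, (M - eps - gam g) \is a Num.int ->
   (forall k, (k <= g)%N -> wk g j M k != 0) /\ (forall k, (k <= g)%N -> j + (M - mu g k) != 0).
  move=> M hM.
  have e1 k : j + (M - mu g k) = (j - eps) + ((M - eps - gam g) + eps *+ 2 + g%:R - k%:R).
    by rewrite /mu /gam mulr2n; field.
  have e2 k : j - (M - mu g k) + 1 = (j - eps) + (- (M - eps - gam g) - g%:R + k%:R + 1).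
    by rewrite /mu /gam; field.
  have n1 k : j + (M - mu g k) != 0.
    rewrite e1 notint_add //; apply: rpredB; [apply: rpredD; [apply: rpredD|]|]; [exact: hM|exact: heps2|exact: natr_int|exact: natr_int].
  split => k _ //.
  rewrite /wk /Gm !mulf_neq0 ?neq0Ci ?sqrtC_eq0 ?n1 //.
  rewrite e2 notint_add //; apply: rpredD; [apply: rpredD; [apply: rpredB|]|]; [rewrite rpredN; exact: hM|exact: natr_int|exact: natr_int|exact: rpred1].
have hchar : forall M, (M - eps - gam g) \is a Num.int ->
     char_poly (Q_blk g j M) =
       \prod_(k < g.+1) ('X - (- ((j + mu g k) * (j + mu g k + 1)))%:P).
  by move=> M hM; apply: charQ; [exact: (HWJ M hM).1 | exact: (HWJ M hM).2].
split; first exact: hchar.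
pose L (x : nat) : algC := - ((j + mu g x) * (j + mu g x + 1)).
have Ldiff a b : L b - L a = (a%:R - b%:R) * ((J2 + a%:Z + b%:Z - g%:Z + 1)%:~R).
  by rewrite !(intrD, intrN, ztoR) -eJ2 [j *+ 2]mulr2n /L /mu /gam; field.
pose lamf := fun k : 'I_g.+1 => L k.
pose lamseq := [seq lamf k | k <- enum 'I_g.+1].
have hprod M : (M - eps - gam g) \is a Num.int ->
    char_poly (Q_blk g j M) = \prod_(x <- lamseq) ('X - x%:P).
  by move=> hM; rewrite hchar // prod_seq.
have c1 : (gam g - 1 < j) = (g%:Z - 2 < J2)%R.
  rewrite -(@ltr_pMn2r _ 2) // eJ2 -(ltr_int algC) intrB ztoR /gam; congr (_ < _).
  by rewrite mulr2n; field.
have c2 : (j < - gam g) = (J2 < - g%:Z)%R.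
  rewrite -(@ltr_pMn2r _ 2) // eJ2 -(ltr_int algC) intrN ztoR /gam; congr (_ < _).
  by rewrite mulr2n; field.
split.
  move=> hd.
  case/boolP: (gam g - 1 < j) => [h|h]; first by left.
  case/boolP: (j < - gam g) => [h'|h']; first by right.
  exfalso; rewrite c1 in h; rewrite c2 in h'.
  pose M := eps + gam g.
  have hM : (M - eps - gam g) \is a Num.int.
    by rewrite (_ : M - eps - gam g = 0) ?rpred0 // /M; ring.
  apply: (@nondiag g (Q_blk g j M) lamseq _ _ _ _ (hd M hM)).
  - exact: rankQ (HWJ M hM).1 (HWJ M hM).2.
  - by move=> r; rewrite eigenvalue_root_char hprod // root_prod_XsubC.
  - by rewrite size_map size_enum_ord.
  apply/negP => hu.
  have /injectiveP inj : injectiveb lamf := hu.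
  have [t ht] : exists t : nat, (t%:Z = g%:Z - 1 - J2)%R by exists (absz (g%:Z - 1 - J2)%R); lia.
  pose a := if (t <= g)%N then 0%N else (t - g)%N.
  pose b := if (t <= g)%N then t else g.
  have hab : (a < b <= g)%N /\ (a + b = t)%N by rewrite /a /b; case: ifP => ?; lia.
  have ea : (inord a : 'I_g.+1) = a :> nat by rewrite inordK //; lia.
  have eb : (inord b : 'I_g.+1) = b :> nat by rewrite inordK //; lia.
  have : lamf (inord a) = lamf (inord b).
    apply/eqP; rewrite eq_sym -subr_eq0 /lamf ea eb Ldiff.
    have -> : (J2 + a%:Z + b%:Z - g%:Z + 1 = 0)%R by lia.
    by rewrite mulr0.
  move/inj => e; have := congr1 (@nat_of_ord _) e; rewrite ea eb; lia.
move=> hc M hM.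
apply: (@diag_of_uniq g (Q_blk g j M) lamseq _ (hprod M hM)).
rewrite map_inj_uniq ?enum_uniq // => a b /eqP.
rewrite eq_sym -subr_eq0 /lamf Ldiff mulf_eq0 subr_eq0 eqr_nat intr_eq0.
case/orP => [/eqP e|/eqP e]; apply/val_inj => //=.
move: hc; rewrite c1 c2 => hc.
have := ltn_ord a; have := ltn_ord b.
case: hc => /= hc; lia.
Qed.
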